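(* (i) Let $G=(V,E,w)$ be a weighted graph with $n=|V|\ge 3$ vertices and symmetric nonnegative weights. Then $\rho^*_G\in[1,n-2]$. (ii) Let $G=(V,E)$ be a connected unweighted graph with $n=|V|$ and $m=|E|$. Then $\rho^*_G\in\left[1,\frac{n^2-2n}{2m-n}\right]$.
   Context: Let $V=\{v_1,\dots,v_n\}$; weights are given by a symmetric nonnegative matrix with $w_{ij}=0$ when $(v_i,v_j)\notin E$. An unweighted graph has all edge weights equal to $1$. An HC-tree for $V$ is a rooted tree with leaf set $V$; LCA denotes lowest common ancestor. For distinct $i,j,k$: relation $\{i,j|k\}$ holds in $T$ if $\mathrm{LCA}(v_i,v_j)$ is a proper descendant of $\mathrm{LCA}(v_i,v_j,v_k)$; $\{i|j|k\}$ holds if $\mathrm{LCA}(v_i,v_j)=\mathrm{LCA}(v_j,v_k)=\mathrm{LCA}(v_i,v_j,v_k)$. The triplet cost $c_T(i,j,k)$ is $w_{ik}+w_{jk}$ if $\{i,j|k\}$ holds, $w_{ij}+w_{jk}$ if $\{i,k|j\}$, $w_{ij}+w_{ik}$ if $\{j,k|i\}$, and $w_{ij}+w_{jk}+w_{ik}$ if $\{i|j|k\}$. $\mathrm{TC}_G(T)=\sum c_T(i,j,k)$ over unordered triples of distinct indices; base cost $\mathrm{BC}(G)=\sum\min\{w_{ij}+w_{ik},w_{ij}+w_{jk},w_{ik}+w_{jk}\}$ over the same triples. The ratio-cost is $\rho_G(T)=\mathrm{TC}_G(T)/\mathrm{BC}(G)$ with conventions $0/0=1$ and $x/0=+\infty$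 for $x>0$, and $\rho^*_G=\min_T\rho_G(T)$ over all HC-trees $T$ for $V$. *)

(* Defs.v *)
From HB Require Import structures.
From mathcomp Require Import all_boot all_order all_algebra.
From mathcomp Require Import constructive_ereal.
Set Implicit Arguments. Unset Strict Implicit. Unset Printing Implicit Defensive.
Import Order.TTheory GRing.Theory Num.Theory.
Local Open Scope ring_scope.

(* A node of the tree
   is identified with its address (the sequence of child indices on the path
   from the root); ancestor = prefix of address. *)
Inductive hctree (n : nat) : Type :=
  | HLeaf of 'I_n
  | HNode of seq (hctree n).

Arguments HLeaf {n}.
Arguments HNode {n}.

Fixpoint leaves {n} (t : hctree n) : seq ('I_n * seq nat) :=
  match t with
  | HLeaf v => [:: (v, [::])]
  | HNode ts =>
      (fix aux (i : nat) (us : seq (hctree n)) :=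
         match us with
         | [::] => [::]
         | u :: us' => [seq (p.1, i :: p.2) | p <- leaves u] ++ aux i.+1 us'
         end) 0%N ts
  end.

(* every internal node has at least one child, so every leaf is labelled *)
Fixpoint no_empty_node {n} (t : hctree n) : bool :=
  match t with
  | HLeaf _ => true
  | HNode ts =>
      (fix aux (us : seq (hctree n)) :=
         match us with
         | [::] => true
         | u :: us' => no_empty_node u && aux us'
         end) ts && (if ts is [::] then false else true)
  end.

Definition is_hctree {n} (t : hctree n) : bool :=
  no_empty_node t && perm_eq [seq p.1 | p <- leaves t] (enum 'I_n).

Definition addr {n} (t : hctree n) (v : 'I_n) : seq nat :=
  nth [::] [seq p.2 | p <- leaves t] (index v [seq p.1 | p <- leaves t]).

Fixpoint lcp (a b : seq nat) : seq nat :=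
  match a, b with
  | x :: a', y :: b' => if x == y then x :: lcp a' b' else [::]
  | _, _ => [::]
  end.

Definition lca2 {n} (t : hctree n) (i j : 'I_n) : seq nat :=
  lcp (addr t i) (addr t j).
Definition lca3 {n} (t : hctree n) (i j k : 'I_n) : seq nat :=
  lcp (lcp (addr t i) (addr t j)) (addr t k).

Definition proper_desc (u v : seq nat) : bool := prefix v u && (u != v).

Definition rel_sep {n} (t : hctree n) (i j k : 'I_n) : bool :=
  proper_desc (lca2 t i j) (lca3 t i j k).
Definition rel_star {n} (t : hctree n) (i j k : 'I_n) : bool :=
  (lca2 t i j == lca3 t i j k) && (lca2 t j k == lca3 t i j k).

Section Costs.
Variable R : realFieldType.
Variable n : nat.
Variable w : 'M[R]_n.

Definition triplet_cost (t : hctree n) (i j k : 'I_n) : R :=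
  if rel_sep t i j k then w i k + w j k
  else if rel_sep t i k j then w i j + w j k
  else if rel_sep t j k i then w i j + w i k
  else if rel_star t i j k then w i j + w j k + w i k
  else 0.

Definition TC (t : hctree n) : R :=
  \sum_(i < n) \sum_(j < n | (i < j)%N) \sum_(k < n | (j < k)%N)
     triplet_cost t i j k.

Definition BC : R :=
  \sum_(i < n) \sum_(j < n | (i < j)%N) \sum_(k < n | (j < k)%N)
     Num.min (w i j + w i k) (Num.min (w i j + w j k) (w i k + w j k)).

Definition rho (t : hctree n) : \bar R :=
  if BC == 0 then (if TC t == 0 then 1%:E else +oo%E)
  else (TC t / BC)%:E.

Definition rho_star_in (lo hi : R) : Prop :=
  exists t : hctree n, [/\ is_hctree t,
    (forall t' : hctree n, is_hctree t' -> (rho t <= rho t')%E),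
    (lo%:E <= rho t)%E & (rho t <= hi%:E)%E].
End Costs.

Definition unweighted {R : realFieldType} {n} (e : rel 'I_n) : 'M[R]_n :=
  \matrix_(i, j) (if e i j then 1 else 0).

Definition num_edges {n} (e : rel 'I_n) : nat :=
  #|[set p : 'I_n * 'I_n | (p.1 < p.2)%N && e p.1 p.2]|.

(* Main.v *)
Require Import Defs.
From HB Require Import structures.
From mathcomp Require Import all_boot all_order all_algebra.
From mathcomp Require Import constructive_ereal.
From mathcomp Require Import all_fingroup.
From mathcomp Require Import zify ring lra.
From Stdlib Require Import Classical_Prop.
Import Order.TTheory GRing.Theory Num.Theory.
Set Implicit Arguments. Unset Strict Implicit. Unset Printing Implicit Defensive.

Lemma leaves_node2 n (u1 u2 : hctree n) :
  leaves (HNode [:: u1; u2]) =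
  [seq (p.1, 0%N :: p.2) | p <- leaves u1] ++ [seq (p.1, 1%N :: p.2) | p <- leaves u2].
Proof. by rewrite /= cats0. Qed.

Lemma addr_of n (L : seq ('I_n * seq nat)) v a :
  uniq [seq p.1 | p <- L] -> (v, a) \in L ->
  nth [::] [seq p.2 | p <- L] (index v [seq p.1 | p <- L]) = a.
Proof.
elim: L => [|[x b] L IH] //= /andP [nx u]; rewrite inE => /orP [/eqP [-> ->]|h].
  by rewrite eqxx.
have xv : x != v.
  apply/eqP => exv; move: nx; rewrite exv => /negP; apply.
  by apply/mapP; exists (v, a).
by rewrite (negbTE xv) /=; apply: IH.
Qed.

Fixpoint catp n (s : seq 'I_n) : hctree n :=
  match s with
  | [::] => HNode [::]
  | v :: s' => if s' is [::] then HLeaf v else HNode [:: HLeaf v; catp s']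
  end.

Definition code (N a : nat) : seq nat :=
  if (a < N)%N then rcons (nseq a 1%N) 0%N else nseq a 1%N.

Lemma codeS N a : code N.+1 a.+1 = 1%N :: code N a.
Proof. by rewrite /code ltnS; case: ifP. Qed.

Lemma leaves_catp n (x0 : 'I_n) (s : seq 'I_n) : s != [::] ->
  leaves (catp s) = [seq (nth x0 s i, code (size s).-1 i) | i <- iota 0 (size s)].
Proof.
elim: s => [|v s IH] // _.
case: s IH => [|u s] IH; first by [].
rewrite [catp _]/= leaves_node2 IH //=.
rewrite -[2%N]/(1 + 1)%N iotaDl -!map_comp.
rewrite /code /= ltnS; congr [:: _, _ & _].
  by congr (_, _); case: ifP.
apply: eq_map => i /=; rewrite ltnS; by case: ifP.
Qed.

Lemma lcp_ones_code m N c : (c <= N)%N ->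
  lcp (nseq m 1%N) (code N c) = nseq (minn m c) 1%N.
Proof.
elim: m N c => [|m IH] N [|c] //=.
- by rewrite /code; case: ifP.
- case: N => [|N] // hc; rewrite codeS /= IH //; by rewrite minnSS.
Qed.

Lemma lcp_code N a b : a != b -> (a <= N)%N -> (b <= N)%N ->
  lcp (code N a) (code N b) = nseq (minn a b) 1%N.
Proof.
elim: a b N => [|a IH] [|b] N //= hab.
- case: N => [|N] // _ hb. by rewrite codeS /code /=.
- case: N => [|N] // ha _. by rewrite codeS /code /=.
- case: N => [|N] // ha hb. by rewrite !codeS /= IH // minnSS.
Qed.

Lemma nseq1_eq a b : (nseq a 1%N == nseq b 1%N) = (a == b).
Proof.
apply/eqP/eqP => [h|-> //]; by rewrite -(size_nseq a 1%N) h size_nseq.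
Qed.

Section Cat.
Variable n : nat.
Definition sr (r : {perm 'I_n}) : seq 'I_n := [seq (r^-1)%g i | i <- enum 'I_n].

Lemma sr_size r : size (sr r) = n.
Proof. by rewrite /sr size_map size_enum_ord. Qed.

Lemma sr_index r x : index x (sr r) = r x.
Proof.
by rewrite /sr -{1}(permK r x) index_map ?index_enum_ord //; apply: perm_inj.
Qed.

Lemma sr_uniq r : uniq (sr r).
Proof. by rewrite /sr map_inj_uniq ?enum_uniq //; apply: perm_inj. Qed.

Lemma sr_perm r : perm_eq (sr r) (enum 'I_n).
Proof.
apply: uniq_perm; rewrite ?sr_uniq ?enum_uniq // => x.
rewrite mem_enum; apply/mapP; exists (r x); rewrite ?mem_enum ?permK //.
Qed.

Lemma no_empty_catp (s : seq 'I_n) : s != [::] -> no_empty_node (catp s).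
Proof.
elim: s => [|v s IH] //= _; case: s IH => [|u s] IH //=.
by rewrite IH.
Qed.

Lemma catp_hctree r : (0 < n)%N -> is_hctree (catp (sr r)).
Proof.
move=> n0; have ne : sr r != [::] by rewrite -size_eq0 sr_size -lt0n.
have x0 : 'I_n by exists 0%N.
rewrite /is_hctree no_empty_catp //= (leaves_catp x0) //.
rewrite -map_comp /=.
have -> : [seq nth x0 (sr r) i | i <- iota 0 (size (sr r))] = sr r.
  by rewrite -{3}(mkseq_nth x0 (sr r)).
exact: sr_perm.
Qed.

Lemma addr_catp r x : (0 < n)%N -> addr (catp (sr r)) x = code n.-1 (r x).
Proof.
move=> n0; have ne : sr r != [::] by rewrite -size_eq0 sr_size -lt0n.
rewrite /addr (leaves_catp x) //.
apply: addr_of.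
  rewrite -map_comp /=.
  have -> : [seq nth x (sr r) i | i <- iota 0 (size (sr r))] = sr r.
    by rewrite -{3}(mkseq_nth x (sr r)).
  exact: sr_uniq.
have xin : x \in sr r by rewrite -index_mem sr_index sr_size ltn_ord.
apply/mapP; exists (nat_of_ord (r x)); first by rewrite mem_iota sr_size add0n ltn_ord.
by rewrite sr_size -{2}(sr_index r x) nth_index.
Qed.
End Cat.

Local Open Scope ring_scope.

Lemma lcpC (a b : seq nat) : lcp a b = lcp b a.
Proof.
elim: a b => [|x a IH] [|y b] //=; rewrite eq_sym; case: eqP => // ->; by rewrite IH.
Qed.

Lemma lcpA (a b c : seq nat) : lcp (lcp a b) c = lcp a (lcp b c).
Proof.
elim: a b c => [|x a IH] [|y b] [|z c] //=;
 repeat (case: eqP => //= ?; subst); rewrite ?eqxx ?IH //.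
all: try by case: (x == y).
all: try by case: eqP.
Qed.

Lemma lcp_prefix (a b : seq nat) : prefix (lcp a b) a.
Proof.
elim: a b => [|x a IH] [|y b] //=; case: (x == y) => //=; by rewrite eqxx IH.
Qed.

Section Cost.
Variable R : realFieldType.
Variable n : nat.
Variable w : 'M[R]_n.

Lemma lca3_ikj (t : hctree n) i j k : lca3 t i k j = lca3 t i j k.
Proof. by rewrite /lca3 !lcpA (lcpC (addr t k)). Qed.
Lemma lca3_jki (t : hctree n) i j k : lca3 t j k i = lca3 t i j k.
Proof. by rewrite /lca3 lcpC lcpA. Qed.

Lemma rel_sepE (t : hctree n) i j k : rel_sep t i j k = (lca2 t i j != lca3 t i j k).
Proof. by rewrite /rel_sep /proper_desc /lca3 lcp_prefix. Qed.

Lemma triplet_costE (t : hctree n) i j k :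
  triplet_cost w t i j k =
  if lca2 t i j != lca3 t i j k then w i k + w j k
  else if lca2 t i k != lca3 t i j k then w i j + w j k
  else if lca2 t j k != lca3 t i j k then w i j + w i k
  else w i j + w j k + w i k.
Proof.
rewrite /triplet_cost !rel_sepE (lca3_ikj t i j k) (lca3_jki t i j k) /rel_star.
case: (eqVneq (lca2 t i j) (lca3 t i j k)) => e1 //=.
case: (eqVneq (lca2 t i k) (lca3 t i j k)) => e2 //=.
case: (eqVneq (lca2 t j k) (lca3 t i j k)) => e3 //=.
Qed.

Hypothesis w_ge0 : forall i j, 0 <= w i j.

Definition bcterm (i j k : 'I_n) : R :=
  Num.min (w i j + w i k) (Num.min (w i j + w j k) (w i k + w j k)).

Lemma cost_ge_bc (t : hctree n) i j k : bcterm i j k <= triplet_cost w t i j k.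
Proof.
rewrite triplet_costE /bcterm.
have h1 := w_ge0 i j; have h2 := w_ge0 i k; have h3 := w_ge0 j k.
case: ifP => _; first by rewrite !ge_min; apply/orP; right; apply/orP; right.
case: ifP => _; first by rewrite !ge_min; apply/orP; right; apply/orP; left.
case: ifP => _; first by rewrite !ge_min; apply/orP; left.
rewrite ge_min; apply/orP; left; lra.
Qed.

Lemma BC_ge0 : 0 <= BC w.
Proof.
rewrite /BC; apply: sumr_ge0 => i _; apply: sumr_ge0 => j _; apply: sumr_ge0 => k _.
by rewrite !le_min !addr_ge0.
Qed.

Lemma TC_ge_BC (t : hctree n) : BC w <= TC w t.
Proof.
rewrite /BC /TC; apply: ler_sum => i _; apply: ler_sum => j _; apply: ler_sum => k _.
exact: cost_ge_bc.
Qed.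

Lemma rho_ge1 (t : hctree n) : (1%:E <= rho w t)%E.
Proof.
rewrite /rho; have h0 := BC_ge0; have h1 := TC_ge_BC t.
case: eqP => [_|/eqP nz]; first by case: eqP => _; rewrite ?lexx ?leey.
rewrite lee_fin ler_pdivlMr ?mul1r //.
by rewrite lt_def nz h0.
Qed.

Lemma rho_le (t : hctree n) (c : R) : 1 <= c ->
  TC w t <= c * BC w -> (rho w t <= c%:E)%E.
Proof.
move=> c1 h; rewrite /rho; have h0 := BC_ge0; have h1 := TC_ge_BC t.
case: eqP => [b0|/eqP nz].
  have -> : TC w t = 0 by apply/eqP; rewrite eq_le; rewrite b0 mulr0 in h; rewrite h /= -b0.
  by rewrite eqxx lee_fin.
by rewrite lee_fin ler_pdivrMr // lt_def nz h0.
Qed.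

Definition pat (t : hctree n) : {ffun 'I_n * 'I_n * 'I_n -> bool * bool * bool * bool} :=
  [ffun x => (rel_sep t x.1.1 x.1.2 x.2, rel_sep t x.1.1 x.2 x.1.2,
              rel_sep t x.1.2 x.2 x.1.1, rel_star t x.1.1 x.1.2 x.2)].

Definition tcostp (b : bool * bool * bool * bool) (i j k : 'I_n) : R :=
  if b.1.1.1 then w i k + w j k
  else if b.1.1.2 then w i j + w j k
  else if b.1.2 then w i j + w i k
  else if b.2 then w i j + w j k + w i k
  else 0.

Definition rhop (p : {ffun 'I_n * 'I_n * 'I_n -> bool * bool * bool * bool}) : \bar R :=
  let tc := \sum_(i < n) \sum_(j < n | (i < j)%N) \sum_(k < n | (j < k)%N)
     tcostp (p (i, j, k)) i j k in
  if BC w == 0 then (if tc == 0 then 1%:E else +oo%E)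
  else (tc / BC w)%:E.

Lemma rhoE (t : hctree n) : rho w t = rhop (pat t).
Proof.
rewrite /rho /rhop /TC.
have -> : \sum_(i < n) \sum_(j < n | (i < j)%N) \sum_(k < n | (j < k)%N)
     tcostp (pat t (i, j, k)) i j k = 
   \sum_(i < n) \sum_(j < n | (i < j)%N) \sum_(k < n | (j < k)%N) triplet_cost w t i j k.
  apply: eq_bigr => i _; apply: eq_bigr => j _; apply: eq_bigr => k _.
  by rewrite /tcostp ffunE.
by [].
Qed.

Lemma exists_min (t0 : hctree n) : is_hctree t0 ->
  exists t, is_hctree t /\ (forall t', is_hctree t' -> (rho w t <= rho w t')%E).
Proof.
move=> h0.
suff: forall m (t : hctree n), is_hctree t ->
    (#|[pred p | (rhop p < rho w t)%E]| <= m)%N ->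
    exists t, is_hctree t /\ (forall t', is_hctree t' -> (rho w t <= rho w t')%E).
  by move/(_ _ t0 h0 (leqnn _)).
elim=> [|m IH] t ht hc.
  exists t; split => // t' ht'; rewrite leNgt; apply/negP => lt.
  have : pat t' \in [pred p | (rhop p < rho w t)%E] by rewrite inE -rhoE.
  move: hc; rewrite leqn0 => /eqP/card0_eq -> //.
case: (Classical_Prop.classic (forall t', is_hctree t' -> (rho w t <= rho w t')%E)) => H.
  by exists t.
have [t' [ht' lt]] : exists t', is_hctree t' /\ (rho w t' < rho w t)%E.
  apply: Classical_Prop.NNPP => N; apply: H => t' ht'; rewrite leNgt; apply/negP => l.
  by apply: N; exists t'.
apply: (IH t' ht').
have sub : [pred p | (rhop p < rho w t')%E] \proper [pred p | (rhop p < rho w t)%E].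
  apply/properP; split.
    by apply/subsetP => p; rewrite !inE => /lt_trans; apply.
  exists (pat t'); first by rewrite inE -rhoE.
  by rewrite inE -rhoE ltxx.
move: (proper_card sub) => hh; rewrite -ltnS; exact: leq_trans hh hc.
Qed.

End Cost.

Section L6.
Variable R : realFieldType.
Variable n : nat.

Definition S3 (G : 'I_n -> 'I_n -> 'I_n -> R) : R :=
  \sum_(i < n) \sum_(j < n | (i < j)%N) \sum_(k < n | (j < k)%N) G i j k.

Lemma S3E G : S3 G = \sum_(i < n) \sum_(j < n) \sum_(k < n)
   (if (i < j)%N && (j < k)%N then G i j k else 0).
Proof.
rewrite /S3; apply: eq_bigr => i _; rewrite big_mkcond; apply: eq_bigr => j _.
case: ifP => ij /=; last by rewrite big1 // => k _; rewrite ?andFb.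
rewrite big_mkcond; apply: eq_bigr => k _ /=; by rewrite ?andTb.
Qed.

Lemma swap_in (G : 'I_n -> 'I_n -> 'I_n -> R) :
  \sum_(i < n) \sum_(j < n) \sum_(k < n) G i j k =
  \sum_(i < n) \sum_(k < n) \sum_(j < n) G i j k.
Proof. by apply: eq_bigr => i _; rewrite exchange_big. Qed.

Lemma swap_out (G : 'I_n -> 'I_n -> 'I_n -> R) :
  \sum_(i < n) \sum_(j < n) \sum_(k < n) G i j k =
  \sum_(j < n) \sum_(i < n) \sum_(k < n) G i j k.
Proof. by rewrite exchange_big. Qed.

Lemma L6 (F : 'I_n -> 'I_n -> 'I_n -> R) :
  \sum_(i < n) \sum_(j < n) \sum_(k < n)
     (if (i != j) && (i != k) && (j != k) then F i j k else 0) =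
  S3 (fun i j k => F i j k + F i k j + F j i k + F j k i + F k i j + F k j i).
Proof.
pose I3 (a b c : 'I_n) (x : R) := if (a < b)%N && (b < c)%N then x else 0.
have pw : forall i j k : 'I_n,
  (if (i != j) && (i != k) && (j != k) then F i j k else 0) =
  I3 i j k (F i j k) + I3 i k j (F i j k) + I3 j i k (F i j k) +
  I3 j k i (F i j k) + I3 k i j (F i j k) + I3 k j i (F i j k).
  move=> i j k; rewrite /I3 -!val_eqE /=.
  case: (ltngtP i j) => hij; case: (ltngtP i k) => hik; case: (ltngtP j k) => hjk /=;
   rewrite ?addr0 ?add0r //; lia.
rewrite S3E.
under eq_bigr do under eq_bigr do under eq_bigr do rewrite pw.
under eq_bigr do under eq_bigr do rewrite !big_split.
under eq_bigr do rewrite !big_split.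
rewrite !big_split /=.
rewrite [X in _ + X = _]swap_in [X in _ + X = _]swap_out [X in _ + X = _]swap_in.
rewrite [X in _ + X + _ = _]swap_in [X in _ + X + _ = _]swap_out.
rewrite [X in _ + X + _ + _ = _]swap_out [X in _ + X + _ + _ = _]swap_in.
rewrite [X in _ + X + _ + _ + _ = _]swap_out.
rewrite [X in _ + X + _ + _ + _ + _ = _]swap_in.
rewrite -!big_split /=; apply: eq_bigr => a _; rewrite -!big_split /=.
apply: eq_bigr => b _; rewrite -!big_split /=; apply: eq_bigr => c _.
by rewrite /I3; case: ifP => _; [ring | rewrite !addr0].
Qed.
End L6.

Lemma ifs3 (R : realFieldType) (a b c : nat) (X Y Z U : R) : (a != b)%N -> (a != c)%N -> (b != c)%N ->
 (if minn a b != minn (minn a b) c then X else if minn a c != minn (minn a b) c then Y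
  else if minn b c != minn (minn a b) c then Z else U) =
 (if (c < a)%N && (c < b)%N then X else 0) + (if (b < a)%N && (b < c)%N then Y else 0)
 + (if (a < b)%N && (a < c)%N then Z else 0).
Proof.
move=> hab hac hbc.
have -> : (minn a b != minn (minn a b) c) = (c < a)%N && (c < b)%N by lia.
have -> : (minn a c != minn (minn a b) c) = (b < a)%N && (b < c)%N by lia.
have -> : (minn b c != minn (minn a b) c) = (a < b)%N && (a < c)%N by lia.
have : (nat_of_bool ((c < a)%N && (c < b)%N) + nat_of_bool ((b < a)%N && (b < c)%N) + nat_of_bool ((a < b)%N && (a < c)%N) = 1)%N by lia.
case: ((c < a)%N && (c < b)%N); case: ((b < a)%N && (b < c)%N); case: ((a < b)%N && (a < c)%N) => //= _;
 by rewrite ?addr0 ?add0r.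
Qed.

Section Avg.
Variable R : realFieldType.
Variable n : nat.
Variable w : 'M[R]_n.
Hypothesis n0 : (0 < n)%N.

Definition first3 (r : {perm 'I_n}) (x y z : 'I_n) : bool := (r x < r y)%N && (r x < r z)%N.

Lemma cost_cat r (i j k : 'I_n) : i != j -> i != k -> j != k ->
  triplet_cost w (catp (sr r)) i j k =
  (if first3 r k i j then w i k + w j k else 0) +
  (if first3 r j i k then w i j + w j k else 0) +
  (if first3 r i j k then w i j + w i k else 0).
Proof.
move=> hij hik hjk.
have ne : forall x y : 'I_n, x != y -> (nat_of_ord (r x) != r y).
  by move=> x y; rewrite val_eqE (inj_eq (@perm_inj _ r)).
have le : forall x : 'I_n, (r x <= n.-1)%N by move=> x; rewrite -ltnS prednK // ltn_ord.
rewrite triplet_costE /lca2 /lca3 !addr_catp //.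
rewrite !lcp_code ?ne // lcp_ones_code // !nseq1_eq.
rewrite /first3; exact: (ifs3 _ _ _ _ (ne _ _ hij) (ne _ _ hik) (ne _ _ hjk)).
Qed.

Definition cnt (x y z : 'I_n) : R := \sum_(r : {perm 'I_n}) (if first3 r x y z then 1 else 0).

Lemma cnt_swap23 x y z : cnt x y z = cnt x z y.
Proof. by apply: eq_bigr => r _; rewrite /first3 andbC. Qed.

Lemma cnt_swap12 x y z : y != z -> x != z -> cnt x y z = cnt y x z.
Proof.
move=> yz xz; rewrite /cnt (reindex_inj (mulgI (tperm x y))).
apply: eq_bigr => r _; rewrite /first3 !permM tpermL tpermR tpermD //.
Qed.

Lemma cnt_sum x y z : x != y -> x != z -> y != z ->
  cnt x y z + cnt y x z + cnt z x y = #|{perm 'I_n}|%:R.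
Proof.
move=> xy xz yz; rewrite /cnt -!big_split /= -sumr_const.
apply: eq_bigr => r _; rewrite /first3.
have ne : forall a b : 'I_n, a != b -> (nat_of_ord (r a) != r b).
  by move=> a b; rewrite val_eqE (inj_eq (@perm_inj _ r)).
move: (ne _ _ xy) (ne _ _ xz) (ne _ _ yz).
set a := nat_of_ord (r x); set b := nat_of_ord (r y); set c := nat_of_ord (r z) => h1 h2 h3.
have : (nat_of_bool ((a < b)%N && (a < c)%N) + nat_of_bool ((b < a)%N && (b < c)%N)
   + nat_of_bool ((c < a)%N && (c < b)%N) = 1)%N by lia.
case: ((a < b)%N && (a < c)%N); case: ((b < a)%N && (b < c)%N); case: ((c < a)%N && (c < b)%N) => //= _;
 by rewrite ?addr0 ?add0r.
Qed.

Lemma sum_if (P : pred {perm 'I_n}) (X : R) :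
  \sum_r (if P r then X else 0) = X * \sum_r (if P r then 1 else 0).
Proof. rewrite mulr_sumr; apply: eq_bigr => r _; by case: (P r); rewrite ?mulr1 ?mulr0. Qed.

Lemma sum_cnt x y z (X : R) :
  \sum_r (if first3 r x y z then X else 0) = X * cnt x y z.
Proof. rewrite /cnt mulr_sumr; apply: eq_bigr => r _; by case: (first3 r x y z); rewrite ?mulr1 ?mulr0. Qed.

Lemma avg_triple (i j k : 'I_n) : i != j -> i != k -> j != k ->
  \sum_r triplet_cost w (catp (sr r)) i j k =
  (#|{perm 'I_n}|%:R / 3) * (2 * (w i j + w i k + w j k)).
Proof.
move=> hij hik hjk.
rewrite (eq_bigr _ (fun r _ => cost_cat r hij hik hjk)).
rewrite !big_split /= !sum_cnt.
have e1 : cnt k i j = cnt i j k.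
  by rewrite (cnt_swap12 (y:=i)) ?(eq_sym k) // cnt_swap23.
have e2 : cnt j i k = cnt i j k by rewrite cnt_swap12 // eq_sym.
have := cnt_sum hij hik hjk.
rewrite e1 e2 => <-.
move: (cnt i j k) (w i j) (w i k) (w j k) => c a b d.
by field; rewrite ?pnatr_eq0.
Qed.
End Avg.

Lemma lt_neq n (i j : 'I_n) : (i < j)%N -> i != j.
Proof. by move=> h; apply/eqP => e; move: h; rewrite e ltnn. Qed.

Section Avg2.
Variable R : realFieldType.
Variable n : nat.
Variable w : 'M[R]_n.
Hypothesis n0 : (0 < n)%N.

Definition tot (i j k : 'I_n) := w i j + w i k + w j k.

Lemma avg_TC : \sum_(r : {perm 'I_n}) TC w (catp (sr r)) =
  (#|{perm 'I_n}|%:R / 3 * 2) * S3 tot.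
Proof.
rewrite /TC /S3 exchange_big mulr_sumr; apply: eq_bigr => i _.
rewrite exchange_big mulr_sumr; apply: eq_bigr => j ij.
rewrite exchange_big mulr_sumr; apply: eq_bigr => k jk.
rewrite avg_triple //; first (rewrite /tot; ring).
- exact: lt_neq.
- apply: lt_neq; exact: ltn_trans ij jk.
- exact: lt_neq.
Qed.

Lemma exists_good : exists r : {perm 'I_n}, TC w (catp (sr r)) <= (2/3) * S3 tot.
Proof.
case: (boolP [exists r : {perm 'I_n}, TC w (catp (sr r)) <= (2/3) * S3 tot]).
  by move/existsP.
move/existsPn => H; exfalso.
have : \sum_(r : {perm 'I_n}) (2/3) * S3 tot < \sum_(r : {perm 'I_n}) TC w (catp (sr r)).
  apply: ltr_sum.
    by apply/hasP; exists 1%g; rewrite ?mem_index_enum.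
  by move=> r _; move: (H r); rewrite -ltNge.
rewrite avg_TC sumr_const.
have e : (2/3 * S3 tot) *+ #|{perm 'I_n}| = #|{perm 'I_n}|%:R / 3 * 2 * S3 tot.
  by rewrite -mulr_natr; ring.
by rewrite e ltxx.
Qed.
End Avg2.

Section Count.
Variable R : realFieldType.
Variable n : nat.

Definition Sd (F : 'I_n -> 'I_n -> 'I_n -> R) : R :=
  \sum_(i < n) \sum_(j < n) \sum_(k < n)
     (if (i != j) && (i != k) && (j != k) then F i j k else 0).

Lemma L6sym (F : 'I_n -> 'I_n -> 'I_n -> R) : (forall i j k, F i j k = F j i k) ->
  S3 (fun i j k => F i j k + F i k j + F j k i) = Sd F / 2.
Proof.
move=> Fs; rewrite /Sd L6 /S3 mulr_suml; apply: eq_bigr => i _.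
rewrite mulr_suml; apply: eq_bigr => j _; rewrite mulr_suml; apply: eq_bigr => k _.
rewrite (Fs j i k) (Fs k i j) (Fs k j i); by field; rewrite ?pnatr_eq0.
Qed.

Lemma sum_ind1 (i : 'I_n) : \sum_(k < n) (if k == i then 1 else 0 : R) = 1.
Proof. by rewrite -big_mkcond big_pred1_eq. Qed.

Lemma sum_k_ne (i j : 'I_n) : i != j ->
  \sum_(k < n) (if (i != k) && (j != k) then 1 else 0 : R) = n%:R - 2.
Proof.
move=> ij.
have pw : forall k : 'I_n, (if (i != k) && (j != k) then 1 else 0 : R) =
   1 - (if k == i then 1 else 0) - (if k == j then 1 else 0).
  move=> k; rewrite (eq_sym i k) (eq_sym j k).
  case: (eqVneq k i) => [ki|ki]; case: (eqVneq k j) => [kj|kj] /=; try ring.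
  by move: ij; rewrite -ki -kj eqxx.
rewrite (eq_bigr _ (fun k _ => pw k)) !sumrB sumr_const card_ord !sum_ind1.
by rewrite -[2]/(1 + 1) opprD addrA.
Qed.

Lemma Sd_pair (g : 'I_n -> 'I_n -> R) :
  Sd (fun i j k => g i j) = (n%:R - 2) * \sum_(i < n) \sum_(j < n) (if i != j then g i j else 0).
Proof.
rewrite /Sd mulr_sumr; apply: eq_bigr => i _; rewrite mulr_sumr; apply: eq_bigr => j _.
case: (eqVneq i j) => [->|ij] /=; first by rewrite mulr0 big1.
rewrite -(sum_k_ne ij) mulr_suml; apply: eq_bigr => k _.
by case: ifP; rewrite ?mul1r ?mul0r.
Qed.
End Count.

Section Graph.
Variable R : realFieldType.
Variable n : nat.
Variable e : rel 'I_n.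
Hypothesis esym : symmetric e.
Hypothesis eirr : irreflexive e.

Notation w := (unweighted (R:=R) e).

Lemma wE i j : w i j = if e i j then 1 else 0.
Proof. by rewrite mxE. Qed.
Lemma wsym i j : w i j = w j i.
Proof. by rewrite !wE esym. Qed.
Lemma wii i : w i i = 0.
Proof. by rewrite wE eirr. Qed.
Lemma wge0 i j : 0 <= w i j.
Proof. by rewrite wE; case: ifP. Qed.
Lemma wsq i j : w i j * w i j = w i j.
Proof. by rewrite wE; case: ifP; rewrite ?mulr1 ?mulr0. Qed.

Definition deg (k : 'I_n) : R := \sum_(j < n) w k j.
Definition Dsum : R := \sum_(k < n) deg k.
Definition Qsum : R := \sum_(k < n) deg k ^+ 2.

Lemma S3tot : S3 (tot w) = (n%:R - 2) / 2 * Dsum.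
Proof.
have -> : S3 (tot w) = S3 (fun i j k => (fun i j k => w i j) i j k + (fun i j k => w i j) i k j
     + (fun i j k => w i j) j k i) by [].
rewrite L6sym; last by move=> i j k; rewrite wsym.
rewrite Sd_pair /Dsum /deg mulrAC; congr (_ * _ * _).
apply: eq_bigr => i _; apply: eq_bigr => j _.
by case: (eqVneq i j) => [->|//]; rewrite wii.
Qed.

Definition wedge (i j k : 'I_n) : R := w i k * w j k + w i j * w k j + w j i * w k i.

Lemma S3wedge : S3 wedge = (Qsum - Dsum) / 2.
Proof.
have -> : S3 wedge = S3 (fun i j k => (fun i j k => w i k * w j k) i j k
     + (fun i j k => w i k * w j k) i k j + (fun i j k => w i k * w j k) j k i) by [].
rewrite L6sym; last by move=> i j k; rewrite mulrC.
congr (_ / _); rewrite /Sd.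
have pw : forall i j k : 'I_n, (if (i != j) && (i != k) && (j != k) then w i k * w j k else 0)
   = w i k * w j k - (if i == j then w i k else 0).
  move=> i j k; case: (eqVneq i j) => [->|ij] /=; first by rewrite wsq subrr.
  case: (eqVneq i k) => [->|ik] /=; first by rewrite wii mul0r subr0.
  case: (eqVneq j k) => [->|jk] /=; first by rewrite wii mulr0 subr0.
  by rewrite subr0.
under eq_bigr do under eq_bigr do under eq_bigr do rewrite pw.
under eq_bigr do under eq_bigr do rewrite sumrB.
under eq_bigr do rewrite sumrB.
rewrite sumrB.
have h1 : \sum_(i < n) \sum_(j < n) \sum_(k < n) w i k * w j k = Qsum.
  rewrite swap_in swap_out /Qsum.
  apply: eq_bigr => k _; rewrite /deg expr2 mulr_suml; apply: eq_bigr => i _.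
  rewrite mulr_sumr; apply: eq_bigr => j _; by rewrite (wsym k i) (wsym k j).
have h2 : \sum_(i < n) \sum_(j < n) \sum_(k < n) (if i == j then w i k else 0) = Dsum.
  rewrite /Dsum; apply: eq_bigr => i _; rewrite /deg.
  rewrite (eq_bigr (fun j => if i == j then deg i else 0)); last first.
    by move=> j _; case: (i == j) => //; rewrite big1.
  rewrite -big_mkcond (eq_bigl (fun j => j == i)) ?big_pred1_eq // => j.
by rewrite h1 h2.
Qed.

Lemma bc_wedge i j k : (2/3) * wedge i j k <= bcterm w i j k.
Proof.
rewrite /bcterm /wedge (wsym k j) (wsym j i) (wsym k i) !wE.
case: (e i j); case: (e i k); case: (e j k); rewrite !le_min; apply/andP; split; 
  rewrite ?le_min; try (apply/andP; split); lra.
Qed.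

Lemma BC_wedge : (2/3) * S3 wedge <= BC w.
Proof.
rewrite /BC /S3 mulr_sumr; apply: ler_sum => i _; rewrite mulr_sumr; apply: ler_sum => j _.
rewrite mulr_sumr; apply: ler_sum => k _; exact: bc_wedge.
Qed.

Lemma Cauchy : (0 < n)%N -> Dsum ^+ 2 <= n%:R * Qsum.
Proof.
move=> n0.
have hn : 0 < n%:R :> R by rewrite ltr0n.
have h : 0 <= \sum_(k < n) (n%:R * deg k - Dsum) ^+ 2.
  by apply: sumr_ge0 => k _; rewrite sqr_ge0.
have e1 : \sum_(k < n) (n%:R * deg k - Dsum) ^+ 2 =
   n%:R * (n%:R * Qsum - Dsum ^+ 2).
  under eq_bigr do rewrite sqrrB.
  rewrite !big_split /= sumrN sumr_const card_ord /Qsum /Dsum.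
  under eq_bigr do rewrite exprMn.
  rewrite -mulr_sumr.
  under [X in _ - X + _]eq_bigr do rewrite -mulr_natr.
  rewrite -mulr_suml -mulr_suml -mulr_sumr -mulr_natr; ring.
rewrite e1 in h; rewrite -subr_ge0; move: h; rewrite pmulr_rge0 //.
Qed.
End Graph.

Section Conn.
Variable R : realFieldType.
Variable n : nat.
Variable e : rel 'I_n.
Hypothesis es : symmetric e.
Hypothesis eirr : irreflexive e.
Hypothesis n3 : (3 <= n)%N.
Hypothesis conn : forall i j, connect e i j.

Notation w := (unweighted (R:=R) e).

Let h0 : (0 < n)%N. Proof. by apply: leq_trans n3. Qed.
Let h1 : (1 < n)%N. Proof. by apply: leq_trans n3. Qed.
Let h2 : (2 < n)%N. Proof. by []. Qed.
Let o0 := Ordinal h0.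
Let o1 := Ordinal h1.
Let o2 := Ordinal h2.

Lemma nbr_exists k : exists a, e k a.
Proof.
case: (boolP [exists a, e k a]) => [/existsP //|/existsPn H]; exfalso.
have cl : closed e (pred1 k).
  move=> x y exy; rewrite !inE.
  case: (eqVneq x k) => [xk|xk]; first by move: (H y); rewrite -xk exy.
  case: (eqVneq y k) => [yk|yk] //; by move: (H x); rewrite -yk es exy.
pose c := if k == o0 then o1 else o0.
have ck : c != k.
  rewrite /c; case: (eqVneq k o0) => [->|ko]; first by rewrite -val_eqE.
  by rewrite eq_sym.
have := closed_connect cl (conn k c); rewrite !inE eqxx => /esym/eqP.
by move/eqP: ck.
Qed.

Lemma two_nbrs : exists x a b, [/\ a != b, e x a & e x b].
Proof.
case: (boolP [exists x, exists a, exists b, (a != b) && e x a && e x b]).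
  move=> /existsP [x /existsP [a /existsP [b /andP [/andP [ab xa] xb]]]].
  by exists x, a, b.
move=> /existsPn H; exfalso.
have uniq : forall x a b, e x a -> e x b -> a = b.
  move=> x a b xa xb; apply/eqP; apply: contraT => ab.
  move: (H x) => /existsPn /(_ a) /existsPn /(_ b); by rewrite ab xa xb.
have [a ea] := nbr_exists o0.
pose S := [pred z | (z == o0) || (z == a)].
have cl : closed e S.
  move=> x y exy; rewrite !inE.
  case: (eqVneq x o0) => [xo|xo] /=.
    rewrite xo in exy; by rewrite (uniq _ _ _ exy ea) eqxx orbT.
  case: (eqVneq x a) => [xa|xa] /=.
    rewrite xa in exy; by rewrite (uniq _ _ _ exy (_ : e a o0)) ?eqxx // es.
  case: (eqVneq y o0) => [yo|yo] /=.
    by rewrite yo es in exy; move: xa; rewrite (uniq _ _ _ exy ea) eqxx.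
  case: (eqVneq y a) => [ya|ya] //=.
  rewrite ya es in exy; move: xo; rewrite (uniq _ _ _ exy (_ : e a o0)) ?eqxx //.
  by rewrite es.
pose c := if a == o1 then o2 else o1.
have cS : c \notin S.
  rewrite !inE /c; case: (eqVneq a o1) => [->|ao] /= //.
  by rewrite eq_sym.
have := closed_connect cl (conn o0 c); rewrite !inE eqxx /= => hc.
by move: cS; rewrite inE -hc.
Qed.

Lemma deg_ge (k : 'I_n) a : e k a -> 1 <= deg R e k.
Proof.
move=> ka; rewrite /deg (bigD1 a) //= wE ka lerDl.
by apply: sumr_ge0 => j _; exact: wge0.
Qed.

Lemma Dsum_gt : n%:R + 1 <= Dsum R e :> R.
Proof.
have [x [a [b [ab xa xb]]]] := two_nbrs.
have dx : 2 <= deg R e x.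
  rewrite /deg (bigD1 a) //= (bigD1 b) //=; last by rewrite eq_sym.
  rewrite !wE xa xb addrA -[2]/(1 + 1) lerDl.
  by apply: sumr_ge0 => j _; exact: wge0.
have : \sum_(k < n) (1 + (if k == x then 1 else 0)) <= Dsum R e.
  apply: ler_sum => k _; case: (eqVneq k x) => [->|_] //.
  have [c kc] := nbr_exists k; rewrite addr0; exact: deg_ge kc.
by rewrite big_split /= sum_ind1 sumr_const card_ord.
Qed.

Lemma Dsum_m : Dsum R e = 2 * (num_edges e)%:R :> R.
Proof.
have cardm : (num_edges e)%:R = \sum_(p : 'I_n * 'I_n)
     (if (p.1 < p.2)%N && e p.1 p.2 then 1 else 0) :> R.
  rewrite /num_edges -sum1_card natr_sum big_mkcond; apply: eq_bigr => p _.
  by rewrite inE; case: ifP.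
have cardm' : (num_edges e)%:R = \sum_(p : 'I_n * 'I_n)
     (if (p.2 < p.1)%N && e p.1 p.2 then 1 else 0) :> R.
  rewrite cardm (reindex_inj (h := fun p : 'I_n * 'I_n => (p.2, p.1))) /=; last first.
    by move=> [x y] [x' y'] [-> ->].
  by apply: eq_bigr => p _; rewrite es.
rewrite /Dsum /deg pair_big /= mulr2n mulrDl mul1r.
rewrite {1}cardm cardm' -big_split /=; apply: eq_bigr => [[i j]] _ /=.
rewrite wE; case: (boolP (e i j)) => eij; rewrite ?andbF ?addr0 //.
have : i != j by apply: contraTneq eij => ->; rewrite eirr.
rewrite -val_eqE /= => nij.
case: (ltngtP i j) => hij //=; rewrite ?addr0 ?add0r //.
by move: nij; rewrite hij eqxx.
Qed.
End Conn.

Lemma rho_le' (R : realFieldType) n (w : 'M[R]_n) (t : hctree n) (c : R) :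
  0 < BC w -> TC w t <= c * BC w -> (rho w t <= c%:E)%E.
Proof.
move=> hb h; rewrite /rho; case: eqP => [b0|_]; first by move: hb; rewrite b0 ltxx.
by rewrite lee_fin ler_pdivrMr.
Qed.

Lemma part2 (R : realFieldType) (n : nat) (e : rel 'I_n) :
      (3 <= n)%N ->
      symmetric e -> irreflexive e ->
      (forall i j, connect e i j) ->
      rho_star_in (unweighted (R:=R) e) 1
        ((n%:R ^+ 2 - 2 * n%:R) / (2 * (num_edges e)%:R - n%:R)).
Proof.
move=> n3 es eirr conn.
have n0 : (0 < n)%N by apply: leq_trans n3.
set w := unweighted (R:=R) e.
have wge : forall i j, 0 <= w i j by move=> i j; exact: wge0.
have [r hr] := exists_good w n0.
have ht : is_hctree (catp (sr r)) by exact: catp_hctree.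
have [t [ht' hmin]] := exists_min w ht.
exists t; split => //; first exact: rho_ge1.
apply: le_trans (hmin _ ht) _.
rewrite -(Dsum_m R es eirr).
have hD := Dsum_gt R es n3 conn.
have hC := Cauchy R e n0.
have hT := S3tot R es eirr.
have hW := S3wedge R es eirr.
have hB := BC_wedge R es.
set D := Dsum R e in hD hC hT hW *.
set Q := Qsum R e in hC hW.
have n3R : 3 <= n%:R :> R by rewrite (ler_nat R 3 n).
have hQD : D < Q.
  have : D * (n%:R + 1) <= D ^+ 2 by rewrite expr2; apply: ler_wpM2l; lra.
  nra.
have hBC : (Q - D) / 3 <= BC w by rewrite -/w in hB; lra.
apply: rho_le'; first lra.
have hx : 0 < D - n%:R by lra.
have hc : 0 <= (n%:R ^+ 2 - 2 * n%:R) / (D - n%:R).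
  apply: divr_ge0; last lra. nra.
apply: le_trans hr _.
rewrite -/w in hT; rewrite hT.
apply: le_trans (_ : (n%:R ^+ 2 - 2 * n%:R) / (D - n%:R) * ((Q - D) / 3) <= _); last first.
  exact: ler_wpM2l.
rewrite [X in _ <= X]mulrAC ler_pdivlMr //.
have key : 0 <= (n%:R - 2) * (n%:R * Q - D ^+ 2) by apply: mulr_ge0; lra.
rewrite expr2 in key *.
nra.
Qed.

Section Beats.
Variable R : realFieldType.
Variable n : nat.
Variable w : 'M[R]_n.
Hypothesis wsym : forall i j, w i j = w j i.

Definition lexlt (c d a b : 'I_n) : bool :=
  (minn c d < minn a b)%N || ((minn c d == minn a b) && (maxn c d < maxn a b)%N).

Definition beats (a b c d : 'I_n) : bool :=
  (w c d < w a b) || ((w a b == w c d) && lexlt c d a b).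

Lemma beats_sym1 a b c d : beats a b c d = beats b a c d.
Proof. by rewrite /beats /lexlt (wsym a b) (minnC a b) (maxnC a b). Qed.
Lemma beats_sym2 a b c d : beats a b c d = beats a b d c.
Proof. by rewrite /beats /lexlt (wsym c d) (minnC c d) (maxnC c d). Qed.

Lemma beats_le a b c d : beats a b c d -> w c d <= w a b.
Proof. by case/orP => [/ltW //|/andP [/eqP -> _]]. Qed.

Lemma beats_anti a b c d : beats a b c d -> ~~ beats c d a b.
Proof.
rewrite /beats /lexlt; case/orP => [h|/andP [/eqP h l]].
  by rewrite ltNge (ltW h) /= (lt_eqF h).
rewrite h ltxx eqxx /=; move: l; lia.
Qed.

Lemma beats_total a b c d :
  ~~ (((a == c) && (b == d)) || ((a == d) && (b == c))) -> beats a b c d || beats c d a b.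
Proof.
move=> ne; rewrite /beats /lexlt.
case: (ltrgtP (w c d) (w a b)) => h //=; rewrite ?eqxx //=.
move: ne; rewrite -!val_eqE /=; lia.
Qed.

Lemma beats_trans a b c d x y : beats a b c d -> beats c d x y -> beats a b x y.
Proof.
rewrite /beats /lexlt => h1 h2.
case/orP: h1 => [h1|/andP [/eqP e1 l1]]; case/orP: h2 => [h2|/andP [/eqP e2 l2]].
- by rewrite (lt_trans h2 h1).
- by rewrite -e2 h1.
- by rewrite e1 h2.
- rewrite e1 e2 eqxx ltxx /=; move: l1 l2; lia.
Qed.

Definition nm (i j k : 'I_n) : bool := ~~ (beats i j i k && beats i j j k).

Lemma nm_sym i j k : nm i j k = nm j i k.
Proof. by rewrite /nm -!(beats_sym1 i j) andbC. Qed.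

Definition Hf (i j k : 'I_n) : R := if nm i j k then w i j else 0.

Hypothesis wge : forall i j, 0 <= w i j.

Lemma bc_H (i j k : 'I_n) : i != j -> i != k -> j != k ->
  Hf i j k + Hf i k j + Hf j k i <= bcterm w i j k.
Proof.
move=> ij ik jk; rewrite /Hf /nm /bcterm.
have vv : (nat_of_ord i != j) && (nat_of_ord i != k) && (nat_of_ord j != k).
  by rewrite !val_eqE ij ik jk.
have t1 : beats i j i k || beats i k i j.
  by apply: beats_total; rewrite -!val_eqE /=; move: vv; lia.
have t2 : beats i j j k || beats j k i j.
  by apply: beats_total; rewrite -!val_eqE /=; move: vv; lia.
have t3 : beats i k j k || beats j k i k.
  by apply: beats_total; rewrite -!val_eqE /=; move: vv; lia.
have e1 : beats i k i j = ~~ beats i j i k.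
  by case/orP: t1 => h; rewrite h (negbTE (beats_anti h)).
have e2 : beats j k i j = ~~ beats i j j k.
  by case/orP: t2 => h; rewrite h (negbTE (beats_anti h)).
have e3 : beats j k i k = ~~ beats i k j k.
  by case/orP: t3 => h; rewrite h (negbTE (beats_anti h)).
have tr1 : beats i j i k -> beats i k j k -> beats i j j k by apply: beats_trans.
have tr2 : beats i k i j -> beats i j j k -> beats i k j k by apply: beats_trans.
have l1 := @beats_le i j i k; have l2 := @beats_le i k i j.
have l3 := @beats_le i j j k; have l4 := @beats_le j k i j.
have l5 := @beats_le i k j k; have l6 := @beats_le j k i k.
rewrite (beats_sym2 i k k j) (beats_sym2 j k j i) (beats_sym2 j k k i) e1 e2 e3 in l2 l4 l6 tr2 *.
have g1 := wge i j; have g2 := wge i k; have g3 := wge j k.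
case: (beats i j i k) l1 l2 tr1 tr2; case: (beats i j j k) l3 l4; case: (beats i k j k) l5 l6 => /=
  l5 l6 l3 l4 l1 l2 tr1 tr2;
  rewrite ?le_min; try (apply/andP; split); rewrite ?le_min; try (apply/andP; split);
  try lra; try (by move: (tr1 isT isT)); try (by move: (tr2 isT isT)).
Qed.
End Beats.

Section Match.
Variable R : realFieldType.
Variable n : nat.
Variable w : 'M[R]_n.
Hypothesis wsym : forall i j, w i j = w j i.

Definition Dm (i j : 'I_n) : bool :=
  (i != j) && [forall k, ((k != i) && (k != j)) ==> (beats w i j i k && beats w i j j k)].

Lemma Dm_sym i j : Dm i j = Dm j i.
Proof.
rewrite /Dm (eq_sym j i); congr (_ && _); apply: eq_forallb => k.
by rewrite (andbC (k != i)) -!(beats_sym1 wsym i j) (andbC (beats w i j j k)).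
Qed.

Lemma Dm_uniq i j l : Dm i j -> Dm i l -> j = l.
Proof.
move=> /andP [ij /forallP Hj] /andP [il /forallP Hl]; apply/eqP; apply: contraT => jl.
have := Hj l; rewrite eq_sym il /= eq_sym jl /= => /andP [b1 _].
have := Hl j; rewrite eq_sym ij /= jl /= => /andP [b2 _].
by move: (beats_anti b1); rewrite b2.
Qed.

Definition pm (i : 'I_n) : 'I_n := odflt i [pick j | Dm i j].

Lemma pm_Dm i j : Dm i j -> pm i = j.
Proof.
move=> h; rewrite /pm; case: pickP => [j' hj' /=|H]; first exact: Dm_uniq hj' h.
by move: (H j); rewrite h.
Qed.

Lemma pm_cases i : (pm i = i) \/ (pm i != i /\ Dm i (pm i)).
Proof.
rewrite /pm; case: pickP => [j hj /=|_ /=]; last by left.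
by right; split => //; move: hj => /andP [/eqP ij _]; apply/eqP => ji; apply: ij.
Qed.

Lemma pm_inv i : pm (pm i) = i.
Proof.
case: (pm_cases i) => [e|[_ h]]; first by rewrite e e.
by apply: pm_Dm; rewrite Dm_sym.
Qed.

Lemma pm_eq i j : i != j -> (pm i == j) = Dm i j.
Proof.
move=> ij; case: (pm_cases i) => [e|[ne h]].
  rewrite e (negbTE ij); apply/esym/negbTE; apply: contra ij => /pm_Dm <-.
  by rewrite e.
by apply/eqP/idP => [<- //|/pm_Dm //].
Qed.

Lemma pm_sym i j : (pm i == j) = (pm j == i).
Proof. by apply/eqP/eqP => <-; rewrite pm_inv. Qed.

Lemma nm_exists i j : i != j -> pm i != j -> exists k, [/\ k != i, k != j & nm w i j k].
Proof.
move=> ij; rewrite pm_eq // /Dm ij /= negb_forall => /existsP [k].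
rewrite negb_imply => /andP [/andP [ki kj] h]; by exists k.
Qed.
End Match.

Section Laux.
Variable n : nat.
Fixpoint laux (i : nat) (us : seq (hctree n)) : seq ('I_n * seq nat) :=
  match us with
  | [::] => [::]
  | u :: us' => [seq (p.1, i :: p.2) | p <- leaves u] ++ laux i.+1 us'
  end.
End Laux.

Lemma leaves_node n (ts : seq (hctree n)) : leaves (HNode ts) = laux 0 ts.
Proof. reflexivity. Qed.

Lemma laux_mem n i (us : seq (hctree n)) x a : (x, a) \in laux i us ->
  exists c, (c < size us)%N /\ exists a', a = (i + c)%N :: a' /\
     (x, a') \in leaves (nth (HNode [::]) us c).
Proof.
elim: us i => [|u us IH] i //=; rewrite mem_cat => /orP [/mapP [[y b] hb [-> ->]]|h].
  by exists 0%N; split => //; exists b; rewrite addn0.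
have [c [hc [a' [-> ha']]]] := IH _ h.
by exists c.+1; split => //; exists a'; rewrite addSnnS.
Qed.

Lemma laux_labels n i (us : seq (hctree n)) :
  [seq p.1 | p <- laux i us] = flatten [seq [seq p.1 | p <- leaves u] | u <- us].
Proof.
elim: us i => [|u us IH] i //=; rewrite map_cat IH -map_comp; congr (_ ++ _).
Qed.

Lemma ne_node n (ts : seq (hctree n)) :
  no_empty_node (HNode ts) = all no_empty_node ts && (0 < size ts)%N.
Proof.
rewrite /=; congr andb; last by case: ts.

Qed.

Section Tree.
Variable R : realFieldType.
Variable n : nat.
Variable w : 'M[R]_n.
Hypothesis wsym : forall i j, w i j = w j i.
Hypothesis n0 : (0 < n)%N.

Notation pm := (pm w).

Definition Kl : seq 'I_n := [seq v : 'I_n <- enum 'I_n | (v <= pm v)%N].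
Definition blk (v : 'I_n) : hctree n :=
  if (v < pm v)%N then HNode [:: HLeaf v; HLeaf (pm v)] else HLeaf v.
Definition Tm : hctree n := HNode [seq blk v | v <- Kl].

Definition lab (v : 'I_n) : seq 'I_n := if (v < pm v)%N then [:: v; pm v] else [:: v].

Lemma lab_blk v : [seq p.1 | p <- leaves (blk v)] = lab v.
Proof. by rewrite /blk /lab; case: ifP. Qed.

Lemma labels_Tm : [seq p.1 | p <- leaves Tm] = flatten [seq lab v | v <- Kl].
Proof.
rewrite /Tm leaves_node laux_labels -map_comp; congr flatten; apply: eq_map => v /=.
exact: lab_blk.
Qed.

Lemma pm_sym' (v x : 'I_n) : (pm v == x) = (v == pm x).
Proof. by rewrite pm_sym // eq_sym. Qed.

Lemma count_lab x : count_mem x (flatten [seq lab v | v <- Kl]) = 1%N.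
Proof.
rewrite count_flatten -map_comp sumnE big_map /Kl big_filter big_mkcond /=.
rewrite big_enum /=.
have pw : forall v : 'I_n, (if (v <= pm v)%N then count_mem x (lab v) else 0%N) =
   (nat_of_bool ((v == x) && (v <= pm v)%N) + nat_of_bool ((v == pm x) && (v < pm v)%N))%N.
  move=> v; rewrite /lab -pm_sym'; case: (ltngtP v (pm v)) => h /=;
  rewrite ?addn0 ?andbT ?andbF ?addn0 //; rewrite (eq_sym x v) ?(eq_sym x (pm v)) //.
rewrite (eq_bigr _ (fun v _ => pw v)) big_split /=.
have s1 : (\sum_(i in 'I_n) nat_of_bool ((i == x) && (i <= pm i)%N))%N = nat_of_bool (x <= pm x)%N.
  rewrite (bigD1 x) //= big1 ?addn0 ?eqxx //.
  by move=> v /negbTE ->.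
have s2 : (\sum_(i in 'I_n) nat_of_bool ((i == pm x) && (i < pm i)%N))%N = nat_of_bool (pm x < x)%N.
  rewrite (bigD1 (pm x)) //= big1 ?addn0 ?eqxx ?pm_inv //.
  by move=> v /negbTE ->.
rewrite s1 s2; case: (ltngtP x (pm x)) => //= h.
Qed.

Lemma Tm_perm : perm_eq [seq p.1 | p <- leaves Tm] (enum 'I_n).
Proof.
rewrite labels_Tm /perm_eq; apply/seq.allP => x _ /=; apply/eqP.
by rewrite count_lab count_uniq_mem ?enum_uniq // mem_enum.
Qed.

Lemma Tm_hctree : is_hctree Tm.
Proof.
rewrite /is_hctree Tm_perm andbT /Tm ne_node; apply/andP; split.
  rewrite all_map; apply/seq.allP => v _ /=; rewrite /blk; by case: ifP.
have o : 'I_n by exists 0%N.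
have x0 : (Ordinal n0) \in Kl by rewrite mem_filter mem_enum; apply/andP; split.
by rewrite size_map; case: Kl x0.
Qed.
End Tree.

Section TreeCost.
Variable R : realFieldType.
Variable n : nat.
Variable w : 'M[R]_n.
Hypothesis wsym : forall i j, w i j = w j i.
Hypothesis n0 : (0 < n)%N.

Notation pm := (pm w).
Notation Tm := (Tm w).
Notation Kl := (Kl w).
Let o := Ordinal n0.

Lemma addr_Tm_spec x : exists c a', [/\ addr Tm x = c :: a', (c < size Kl)%N &
   (x == nth o Kl c) || ((nth o Kl c < pm (nth o Kl c))%N && (x == pm (nth o Kl c)))].
Proof.
have xin : x \in [seq p.1 | p <- leaves Tm] by rewrite (perm_mem (Tm_perm wsym)) mem_enum.
have uq : uniq [seq p.1 | p <- leaves Tm] by rewrite (perm_uniq (Tm_perm wsym)) enum_uniq.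
case/mapP: xin => [[y a] ha /= ey]; subst y.
have ad : addr Tm x = a by rewrite /addr; apply: addr_of.
move: ha; rewrite /Tm leaves_node => /laux_mem [c [hc [a' [ea ha']]]].
rewrite size_map in hc; rewrite (nth_map o) // in ha'.
exists c, a'; split => //; first by rewrite ad ea add0n.
have := map_f fst ha'; rewrite /= lab_blk /lab; case: ifP => h; rewrite !inE ?h //=.
by move=> ->.
Qed.

Lemma Kl_le v : v \in Kl -> (v <= pm v)%N.
Proof. by rewrite mem_filter => /andP []. Qed.

Lemma Kl_uniq : uniq Kl.
Proof. by rewrite filter_uniq ?enum_uniq. Qed.

Lemma F2 x y : x != y -> head 0%N (addr Tm x) = head 0%N (addr Tm y) -> pm x = y.
Proof.
have [c [a [ex hc hx]]] := addr_Tm_spec x; have [c' [a' [ey hc' hy]]] := addr_Tm_spec y.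
rewrite ex ey /= => xy ecc; subst c'.
set v := nth o Kl c in hx hy.
case/orP: hx => [/eqP ex'|/andP [_ /eqP ex']]; case/orP: hy => [/eqP ey'|/andP [_ /eqP ey']].
- by move: xy; rewrite ex' ey' eqxx.
- by rewrite ex' ey'.
- by rewrite ex' ey' pm_inv.
- by move: xy; rewrite ex' ey' eqxx.
Qed.

Lemma F3 x y : x != y -> pm x = y -> head 0%N (addr Tm x) = head 0%N (addr Tm y).
Proof.
have [c [a [ex hc hx]]] := addr_Tm_spec x; have [c' [a' [ey hc' hy]]] := addr_Tm_spec y.
rewrite ex ey /= => xy pxy.
have pinj : forall a b, pm a = pm b -> a = b.
  by move=> a0 b0 e; rewrite -(pm_inv wsym a0) e pm_inv.
suff vv : nth o Kl c = nth o Kl c'.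
  by apply/eqP; rewrite -(nth_uniq o hc hc' Kl_uniq); apply/eqP.
have lv : (nth o Kl c <= pm (nth o Kl c))%N by apply: Kl_le; apply: mem_nth.
have lv' : (nth o Kl c' <= pm (nth o Kl c'))%N by apply: Kl_le; apply: mem_nth.
move: hx hy lv lv'; move: (nth o Kl c) (nth o Kl c') => v v' hx hy lv lv'.
have anti : forall a b : 'I_n, (a <= b)%N -> (b <= a)%N -> a = b.
  by move=> a0 b0 h1 h2; apply: val_inj; apply/eqP; rewrite eqn_leq h1.
case/orP: hx => [/eqP exv|/andP [_ /eqP exv]]; case/orP: hy => [/eqP eyv|/andP [_ /eqP eyv]];
  rewrite exv eyv in pxy xy.
- apply: anti; first by rewrite -pxy.
  by move: lv'; rewrite -pxy pm_inv.
- exact: pinj.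
- by move: pxy; rewrite pm_inv.
- move: pxy; rewrite pm_inv // => e; subst v.
  apply: anti => //; by move: lv; rewrite pm_inv.
Qed.
End TreeCost.

Section TreeCost2.
Variable R : realFieldType.
Variable n : nat.
Variable w : 'M[R]_n.
Hypothesis wsym : forall i j, w i j = w j i.
Hypothesis n0 : (0 < n)%N.

Notation pm := (pm w).
Notation Tm := (Tm w).

Lemma addr_cons x : exists c a, addr Tm x = c :: a.
Proof. by have [c [a [ex _ _]]] := addr_Tm_spec wsym n0 x; exists c, a. Qed.

Lemma lca2_Tm x y : x != y -> (lca2 Tm x y == [::]) = (pm x != y).
Proof.
move=> xy; have [c [a ex]] := addr_cons x; have [c' [a' ey]] := addr_cons y.
have F2' := @F2 _ _ _ wsym n0 x y xy; have F3' := @F3 _ _ _ wsym n0 x y xy.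
rewrite ex ey /= in F2' F3'; rewrite /lca2 ex ey /=.
case: (eqVneq c c') => [e|ne] /=.
  by rewrite (F2' e) eqxx.
apply/esym/eqP => /F3' e; by move: ne; rewrite e eqxx.
Qed.

Lemma lca3_Tm i j k : i != j -> i != k -> j != k -> lca3 Tm i j k = [::].
Proof.
move=> ij ik jk; have [c [a ei]] := addr_cons i; have [c' [a' ej]] := addr_cons j.
have [c'' [a'' ek]] := addr_cons k.
have F2a := @F2 _ _ _ wsym n0 i j ij; have F2b := @F2 _ _ _ wsym n0 i k ik.
rewrite ei ej ek /= in F2a F2b; rewrite /lca3 ei ej ek /=.
case: (eqVneq c c') => [e|ne] //=; subst c'.
case: (eqVneq c c'') => [e|ne] //=; subst c''.
by move: jk; rewrite -(F2a erefl) -(F2b erefl) eqxx.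
Qed.

Definition Gf (i j k : 'I_n) : R := if pm i == j then 0 else w i j.

Lemma cost_Tm i j k : i != j -> i != k -> j != k ->
  triplet_cost w Tm i j k = Gf i j k + Gf i k j + Gf j k i.
Proof.
move=> ij ik jk.
rewrite triplet_costE (lca3_Tm ij ik jk) (lca2_Tm ij) (lca2_Tm ik) (lca2_Tm jk) !negbK /Gf.
have f1 : pm i == j -> pm i == k = false by move/eqP ->; rewrite (negbTE jk).
have f2 : pm i == j -> pm j == k = false.
  by move=> h; rewrite pm_sym // in h; rewrite (eqP h) (negbTE ik).
have f3 : pm i == k -> pm j == k = false.
  move=> /eqP h; apply/negbTE/eqP => h'.
  have e1 : pm k = i by rewrite -h pm_inv.
  have e2 : pm k = j by rewrite -h' pm_inv.
  by move: ij; rewrite -e1 -e2 eqxx.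
case: (pm i == j) f1 f2 => [f1 f2|_ _]; first by rewrite f1 ?f2 //; ring.
case: (pm i == k) f3 => [f3|_]; first by rewrite f3 //; ring.
by case: (pm j == k); ring.
Qed.

Hypothesis wge : forall i j, 0 <= w i j.

Definition Pm : R := \sum_(i < n) \sum_(j < n) (if i != j then Gf i j i else 0).

Lemma TC_Tm : TC w Tm = (n%:R - 2) * Pm / 2.
Proof.
have -> : TC w Tm = S3 (fun i j k => Gf i j k + Gf i k j + Gf j k i).
  rewrite /TC /S3; apply: eq_bigr => i _; apply: eq_bigr => j ij; apply: eq_bigr => k jk.
  apply: cost_Tm; [exact: lt_neq | apply: lt_neq; exact: ltn_trans ij jk | exact: lt_neq].
rewrite L6sym; last by move=> i j k; rewrite /Gf pm_sym // wsym.
by rewrite (Sd_pair (fun i j => Gf i j i)).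
Qed.

Lemma BC_Tm : Pm / 2 <= BC w.
Proof.
apply: le_trans (_ : S3 (fun i j k => Hf w i j k + Hf w i k j + Hf w j k i) <= _); last first.
  rewrite /BC /S3; apply: ler_sum => i _; apply: ler_sum => j ij; apply: ler_sum => k jk.
  apply: bc_H => //; [exact: lt_neq | apply: lt_neq; exact: ltn_trans ij jk | exact: lt_neq].
rewrite L6sym; last by move=> i j k; rewrite /Hf nm_sym // wsym.
rewrite ler_pM2r ?invr_gt0 ?ltr0n //.
rewrite /Pm /Sd; apply: ler_sum => i _; apply: ler_sum => j _.
have Hge : forall k, 0 <= Hf w i j k by move=> k; rewrite /Hf; case: ifP.
case: (eqVneq i j) => [<-|ij] /=.
  by rewrite big1 // => k _; rewrite eqxx.
rewrite /Gf; case: (boolP (pm i == j)) => pij.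
  by apply: sumr_ge0 => k _; case: ifP.
have [k [ki kj hk]] := nm_exists ij pij.
rewrite (bigD1 k) //= (eq_sym i k) ki (eq_sym j k) kj /= /Hf hk lerDl.
by apply: sumr_ge0 => k' _; case: ifP => _ //; case: ifP => _ //; exact: wge.
Qed.

Lemma part1_bound : (2 <= n)%N -> TC w Tm <= (n%:R - 2) * BC w.
Proof.
move=> n2'.
have n2 : 0 <= n%:R - 2 :> R by rewrite subr_ge0 (ler_nat R 2 n).
rewrite TC_Tm -mulrA; apply: ler_wpM2l => //; exact: BC_Tm.
Qed.
End TreeCost2.

Lemma part1 (R : realFieldType) (n : nat) (w : 'M[R]_n) :
      (3 <= n)%N ->
      (forall i j, w i j = w j i) ->
      (forall i j, 0 <= w i j) ->
      rho_star_in w 1 (n%:R - 2).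
Proof.
move=> n3 wsym wge.
have n0 : (0 < n)%N by apply: leq_trans n3.
have ht := Tm_hctree wsym n0.
have [t [ht' hmin]] := exists_min w ht.
exists t; split => //; first exact: rho_ge1.
apply: le_trans (hmin _ ht) _.
apply: rho_le => //.
  by rewrite lerBrDr (ler_nat R 3 n).
apply: part1_bound => //; exact: leq_trans n3.
Qed.

Theorem theorem1 :
  (* (i) weighted graphs *)
  (forall (R : realFieldType) (n : nat) (w : 'M[R]_n),
      (3 <= n)%N ->
      (forall i j, w i j = w j i) ->
      (forall i j, 0 <= w i j) ->
      rho_star_in w 1 (n%:R - 2))
  /\
  (* (ii) connected unweighted graphs *)
  (forall (R : realFieldType) (n : nat) (e : rel 'I_n),
      (3 <= n)%N ->
      symmetric e -> irreflexive e ->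
      (forall i j, connect e i j) ->
      rho_star_in (unweighted (R:=R) e) 1
        ((n%:R ^+ 2 - 2 * n%:R) / (2 * (num_edges e)%:R - n%:R))).
Proof.
split; [exact: part1 | exact: part2].
Qed.
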